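(* Let $n\ge 3$. For any word $w(A,B)\in\mathbb F_2=\langle A,B\rangle$, the kernel $\operatorname{Ker}(\Theta_n^w)$ contains a subgroup isomorphic to the free group of rank $2$.
   Context: For $n\ge 2$, the flat virtual braid group $FVB_n$ is the group with generators $\sigma_1,\dots,\sigma_{n-1},\rho_1,\dots,\rho_{n-1}$ and defining relations: $\sigma_i^2=1$, $\rho_i^2=1$ for $1\le i\le n-1$; $\sigma_i\sigma_{i+1}\sigma_i=\sigma_{i+1}\sigma_i\sigma_{i+1}$, $\rho_i\rho_{i+1}\rho_i=\rho_{i+1}\rho_i\rho_{i+1}$ and $\rho_i\rho_{i+1}\sigma_i=\sigma_{i+1}\rho_i\rho_{i+1}$ for $1\le i\le n-2$; $\sigma_i\sigma_j=\sigma_j\sigma_i$, $\rho_i\rho_j=\rho_j\rho_i$ and $\rho_i\sigma_j=\sigma_j\rho_i$ for $|i-j|\ge 2$. $\mathbb F_{2n}$ is the free group on $x_1,\dots,x_n,y_1,\dots,y_n$; automorphisms compose left to right, $(\varphi\psi)(f)=\psi(\varphi(f))$; generators not mentioned are fixed. For $w(A,B)\in\mathbb F_2$, $\Theta_n^w\colon FVB_n\to\mathrm{Aut}(\mathbb F_{2n})$ is the homomorphism given by $\Theta_n^w(\sigma_i): x_i\mapsto x_{i+1}w(y_i,y_{i+1}),\ x_{i+1}\mapsto x_i w(y_i,y_{i+1})^{-1}$ and $\Theta_n^w(\rho_i): x_i\mapsto x_{i+1},\ x_{i+1}\mapsto x_i,\ y_i\mapsto y_{i+1},\ y_{i+1}\mapsto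 y_i$. *)

(* Defs.v *)
From mathcomp Require Import all_boot.
Set Implicit Arguments. Unset Strict Implicit. Unset Printing Implicit Defensive.

(* A letter over a generator type G is (g, e): e = false means g, e = true g^{-1}. *)
Definition flip (G : Type) (a : G * bool) : G * bool := (a.1, ~~ a.2).
Definition winv (G : Type) (s : seq (G * bool)) : seq (G * bool) := rev (map (@flip G) s).

Definition reduce (G : eqType) (s : seq (G * bool)) : seq (G * bool) :=
  foldr (fun a acc => match acc with
                      | b :: acc' => if b == flip a then acc' else a :: acc
                      | [::] => [:: a] end) [::] s.

Definition reduced (G : eqType) (s : seq (G * bool)) : bool := reduce s == s.

Definition wsubst (G : Type) (H : eqType) (f : G -> seq (H * bool))
  (s : seq (G * bool)) : seq (H * bool) :=
  reduce (flatten (map (fun a => if a.2 then winv (f a.1) else f a.1) s)).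

(* F_2 = <A,B>: generators bool, false = A, true = B.
   F_{2n}: generators (bool * nat): (false, j) = x_{j+1}, (true, j) = y_{j+1}
   (0-based indices j < n).
   FVB_n: generators (bool * nat): (false, i) = sigma_{i+1}, (true, i) = rho_{i+1}
   (0-based indices i < n-1). *)

Definition theta_gen (w : seq (bool * bool)) (g : bool * nat) (z : bool * nat)
  : seq ((bool * nat) * bool) :=
  let i := g.2 in
  if ~~ g.1 then
    (* sigma_i : x_i -> x_{i+1} w(y_i,y_{i+1}), x_{i+1} -> x_i w(y_i,y_{i+1})^{-1} *)
    let W := wsubst (fun b : bool => [:: ((true, if b then i.+1 else i), false)]) w in
    if z == (false, i) then ((false, i.+1), false) :: W
    else if z == (false, i.+1) then ((false, i), false) :: winv W
    else [:: (z, false)]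
  else
    if z.2 == i then [:: ((z.1, i.+1), false)]
    else if z.2 == i.+1 then [:: ((z.1, i), false)]
    else [:: (z, false)].

(* Theta_n^w(g1^{e1} ... gk^{ek}) applied to f, with left-to-right composition
   (phi psi)(f) = psi(phi(f)).  Each Theta_n^w(g) is an involution of F_{2n},
   so Theta_n^w(g^{-1}) = Theta_n^w(g). *)
Definition theta_word (w : seq (bool * bool)) (u : seq ((bool * nat) * bool))
  (f : seq ((bool * nat) * bool)) : seq ((bool * nat) * bool) :=
  foldl (fun f a => wsubst (theta_gen w a.1) f) f u.

Definition in_ker (n : nat) (w : seq (bool * bool)) (u : seq ((bool * nat) * bool))
  : Prop :=
  forall z : bool * nat, z.2 < n -> theta_word w u [:: (z, false)] = [:: (z, false)].

Definition sg (i : nat) : (bool * nat) * bool := ((false, i), false).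
Definition rh (i : nat) : (bool * nat) * bool := ((true, i), false).

Inductive fvb_defrel (n : nat) : seq ((bool * nat) * bool) -> seq ((bool * nat) * bool) -> Prop :=
| R_sq_s i : i < n.-1 -> fvb_defrel n [:: sg i; sg i] [::]
| R_sq_r i : i < n.-1 -> fvb_defrel n [:: rh i; rh i] [::]
| R_br_s i : i.+1 < n.-1 ->
    fvb_defrel n [:: sg i; sg i.+1; sg i] [:: sg i.+1; sg i; sg i.+1]
| R_br_r i : i.+1 < n.-1 ->
    fvb_defrel n [:: rh i; rh i.+1; rh i] [:: rh i.+1; rh i; rh i.+1]
| R_mixed i : i.+1 < n.-1 ->
    fvb_defrel n [:: rh i; rh i.+1; sg i] [:: sg i.+1; rh i; rh i.+1]
| R_comm_ss i j : i < n.-1 -> j < n.-1 -> (i.+1 < j) || (j.+1 < i) ->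
    fvb_defrel n [:: sg i; sg j] [:: sg j; sg i]
| R_comm_rr i j : i < n.-1 -> j < n.-1 -> (i.+1 < j) || (j.+1 < i) ->
    fvb_defrel n [:: rh i; rh j] [:: rh j; rh i]
| R_comm_rs i j : i < n.-1 -> j < n.-1 -> (i.+1 < j) || (j.+1 < i) ->
    fvb_defrel n [:: rh i; sg j] [:: sg j; rh i].

Inductive fvb_eq (n : nat) : seq ((bool * nat) * bool) -> seq ((bool * nat) * bool) -> Prop :=
| E_refl u : fvb_eq n u u
| E_sym u v : fvb_eq n u v -> fvb_eq n v u
| E_trans u v t : fvb_eq n u v -> fvb_eq n v t -> fvb_eq n u t
| E_ctx p s u v : fvb_eq n u v -> fvb_eq n (p ++ u ++ s) (p ++ v ++ s)
| E_cancel a : a.1.2 < n.-1 -> fvb_eq n [:: a; flip a] [::]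
| E_rel u v : fvb_defrel n u v -> fvb_eq n u v.

Definition fvb_word (n : nat) (u : seq ((bool * nat) * bool)) : bool :=
  all (fun a => a.1.2 < n.-1) u.

(* Main.v *)
Require Import Defs.
From mathcomp Require Import all_boot zify.
Set Implicit Arguments. Unset Strict Implicit. Unset Printing Implicit Defensive.

Section FG.
Variable G : eqType.
Implicit Types (a b : G * bool) (s t : seq (G * bool)).

Definition step a (acc : seq (G * bool)) :=
  match acc with
  | b :: acc' => if b == flip a then acc' else a :: acc
  | [::] => [:: a] end.

Lemma reduceE s : reduce s = foldr step [::] s.
Proof. by []. Qed.

Fixpoint nored s : bool :=
  match s with
  | a :: ((b :: _) as t) => (b != flip a) && nored t
  | _ => true end.

Lemma flipK a : flip (flip a) = a.
Proof. by case: a => x [|]. Qed.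

Lemma flip_eq a b : (flip a == b) = (a == flip b).
Proof. by apply/eqP/eqP => [<-|->]; rewrite flipK. Qed.

Lemma nored_tl a s : nored (a :: s) -> nored s.
Proof. by case: s => //= b s /andP[]. Qed.

Lemma nored_step a s : nored s -> nored (step a s).
Proof.
case: s => [|b s] //= H.
case: ifP => Hb; first exact: nored_tl H.
by rewrite /= Hb H.
Qed.

Lemma nored_reduce s : nored (reduce s).
Proof. by elim: s => //= a s IH; apply: nored_step. Qed.

Lemma nored_foldr s acc : nored acc -> nored (foldr step acc s).
Proof. by move=> H; elim: s => //= a s IH; apply: nored_step. Qed.

Lemma reduce_id s : nored s -> reduce s = s.
Proof.
elim: s => // a s IH H /=; rewrite IH; last exact: nored_tl H.
case: s H {IH} => //= b s /andP[Hb _]; by rewrite (negbTE Hb).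
Qed.

Lemma reduceK s : reduce (reduce s) = reduce s.
Proof. exact/reduce_id/nored_reduce. Qed.

Lemma step_flip a x : nored x -> step a (step (flip a) x) = x.
Proof.
case: x => [|b x] /=; first by rewrite eqxx.
case: ifP => [/eqP ->|Hb] /=; rewrite ?flipK.
- case: x => [|c x] /=; first by [].
  move=> /andP[Hc _]; by rewrite (negbTE Hc).
- by rewrite eqxx.
Qed.

Lemma foldr_step_reduce s acc : nored acc ->
  foldr step acc (reduce s) = foldr step acc s.
Proof.
move=> Hacc; elim: s => //= a s IH; rewrite -IH.
have Hn := nored_reduce s.
case: (reduce s) Hn => [|b t] //= Hn.
case: ifP => [/eqP Hb|_] //=.
rewrite Hb step_flip //; apply: nored_foldr; last exact: Hacc.
Qed.

Lemma reduce_cat s t : reduce (s ++ t) = foldr step (reduce t) s.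
Proof. by rewrite reduceE foldr_cat. Qed.

Lemma reduce_catl s t : reduce (reduce s ++ t) = reduce (s ++ t).
Proof. rewrite !reduce_cat foldr_step_reduce //; exact: nored_reduce. Qed.

Lemma reduce_catr s t : reduce (s ++ reduce t) = reduce (s ++ t).
Proof. by rewrite !reduce_cat reduceK. Qed.

Lemma reduce_mid x s z : reduce (x ++ reduce s ++ z) = reduce (x ++ s ++ z).
Proof. by rewrite -reduce_catr reduce_catl reduce_catr. Qed.

Lemma winv_cons a s : winv (a :: s) = winv s ++ [:: flip a].
Proof. by rewrite /winv /= rev_cons cats1. Qed.

Lemma winv_cat s t : winv (s ++ t) = winv t ++ winv s.
Proof. by rewrite /winv map_cat rev_cat. Qed.

Lemma winvK s : winv (winv s) = s.
Proof. by rewrite /winv map_rev revK -map_comp map_id_in // => a _ /=; rewrite flipK. Qed.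

Lemma reduce_cons a s : reduce (a :: s) = step a (reduce s).
Proof. by []. Qed.

Lemma cancel_l s t : reduce (s ++ winv s ++ t) = reduce t.
Proof.
elim: s t => // a s IH t.
have -> : (a :: s) ++ winv (a :: s) ++ t = a :: (s ++ winv s ++ (flip a :: t)).
  by rewrite winv_cons -catA.
by rewrite reduce_cons IH reduce_cons step_flip ?nored_reduce.
Qed.

Lemma cancel_r s t : reduce (winv s ++ s ++ t) = reduce t.
Proof. by have := cancel_l (winv s) t; rewrite winvK. Qed.

Lemma cancel_m x s t : reduce (x ++ s ++ winv s ++ t) = reduce (x ++ t).
Proof. by rewrite -reduce_catr cancel_l reduce_catr. Qed.

Lemma reduce_winv s t : reduce s = reduce t -> reduce (winv s) = reduce (winv t).
Proof.
move=> H.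
have E1 : reduce (winv s) = reduce (winv s ++ t ++ winv t).
  by rewrite -(cats0 (winv t)) cancel_m cats0.
rewrite E1 -reduce_mid -H reduce_mid -[winv s ++ _]cats0.
by rewrite -catA -(cats0 (winv t)) -catA cancel_r cats0.
Qed.

End FG.

Section WS.
Variables (G : eqType) (H : eqType) (K : eqType).
Implicit Types (f : G -> seq (H * bool)) (a : G * bool) (s t : seq (G * bool)).

Definition img (f : G -> seq (H * bool)) (s : seq (G * bool)) : seq (H * bool) :=
  flatten (map (fun a => if a.2 then winv (f a.1) else f a.1) s).

Lemma wsubstE f s : wsubst f s = reduce (img f s).
Proof. by []. Qed.

Lemma img_cat f s t : img f (s ++ t) = img f s ++ img f t.
Proof. by rewrite /img map_cat flatten_cat. Qed.

Lemma img_cons f a s : img f (a :: s) =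
  (if a.2 then winv (f a.1) else f a.1) ++ img f s.
Proof. by []. Qed.

Lemma img_flip f a : (if (flip a).2 then winv (f (flip a).1) else f (flip a).1)
  = winv (if a.2 then winv (f a.1) else f a.1).
Proof. by case: a => x [|] /=; rewrite ?winvK. Qed.

Lemma img_reduce f s : reduce (img f (reduce s)) = reduce (img f s).
Proof.
elim: s => // a s IH.
rewrite reduce_cons img_cons.
have E : reduce (img f (step a (reduce s))) = reduce (img f (a :: reduce s)).
  case: (reduce s) => [|b t] //=.
  case: ifP => [/eqP Hb|_] //.
  by rewrite img_cons img_cons Hb img_flip cancel_l.
rewrite E img_cons -reduce_catr IH reduce_catr.
by [].
Qed.

Lemma wsubst_ext f g s : f =1 g -> wsubst f s = wsubst g s.
Proof. by move=> E; rewrite !wsubstE /img; congr (reduce (flatten _)); apply: eq_map => a; rewrite E. Qed.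

Lemma img_winv f s : img f (winv s) = winv (img f s).
Proof.
elim: s => //= a s IH.
rewrite winv_cons img_cat IH img_cons winv_cat /img /= cats0.
by rewrite img_flip.
Qed.

Lemma reduce_img_congr f s t : reduce s = reduce t -> reduce (img f s) = reduce (img f t).
Proof. by move=> E; rewrite -img_reduce E img_reduce. Qed.

Lemma wsubst1 f (z : G) : wsubst f [:: (z, false)] = reduce (f z).
Proof. by rewrite wsubstE /img /= cats0. Qed.

End WS.

Lemma wsubst_comp (G H K : eqType) (f : H -> seq (K * bool)) (g : G -> seq (H * bool)) s :
  wsubst f (wsubst g s) = wsubst (fun c => wsubst f (g c)) s.
Proof.
rewrite !wsubstE img_reduce.
elim: s => // a s IH.
rewrite img_cons img_cat img_cons -reduce_catr IH reduce_catr.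
rewrite -[LHS]reduce_catl -[RHS]reduce_catl; congr (reduce (_ ++ _)).
case: a => c [|] /=.
- by rewrite img_winv; apply: reduce_winv; rewrite wsubstE reduceK.
- by rewrite wsubstE reduceK.
Qed.

Definition atom := (nat * (nat * nat))%type.
Definition swn (i k : nat) : nat := if k == i then i.+1 else if k == i.+1 then i else k.

Definition thp (g : bool * nat) (c : atom) : seq (atom * bool) :=
  let i := g.2 in
  if ~~ g.1 then
    if (c.1 == 0) && (c.2.1 == i) then [:: ((0, (i.+1, 0)), false); ((2, (i, i.+1)), false)]
    else if (c.1 == 0) && (c.2.1 == i.+1) then [:: ((0, (i, 0)), false); ((2, (i, i.+1)), true)]
    else [:: (c, false)]
  else if c.1 < 2 then [:: ((c.1, (swn i c.2.1, c.2.2)), false)]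
  else [:: ((c.1, (swn i c.2.1, swn i c.2.2)), false)].

Definition thpw (u : seq ((bool * nat) * bool)) (s : seq (atom * bool)) :=
  foldl (fun s a => wsubst (thp a.1) s) s u.

Section TH.
Variable w : seq (bool * bool).

Definition interp (c : atom) : seq ((bool * nat) * bool) :=
  if c.1 == 0 then [:: ((false, c.2.1), false)]
  else if c.1 == 1 then [:: ((true, c.2.1), false)]
  else wsubst (fun b : bool => [:: ((true, if b then c.2.2 else c.2.1), false)]) w.

Lemma reduce1 (G : eqType) (z : G * bool) : reduce [:: z] = [:: z].
Proof. by []. Qed.

Lemma comm_atom g c : wsubst (theta_gen w g) (interp c) = wsubst interp (thp g c).
Proof.
case: c => [t [j k]].
case: g => [b i].
rewrite /interp /thp /=.
case: t => [|[|t]] /=.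
-
  rewrite wsubst1 /theta_gen /=.
  case: b => /=.
  + rewrite wsubst1 /= /swn.
    by case: (j == i); case: (j == i.+1).
  + case: (j =P i) => [->|Hj].
    * by rewrite eqxx wsubstE; congr reduce; rewrite /img /= cats0.
    * have -> : ((false, j) == (false, i)) = false by apply/eqP => -[].
      case: (j =P i.+1) => [->|Hj2].
      - by rewrite eqxx wsubstE; congr reduce; rewrite /img /= cats0.
      - have -> : ((false, j) == (false, i.+1)) = false by apply/eqP => -[].
        by rewrite wsubst1.
-
  rewrite wsubst1 /theta_gen /=.
  case: b => /=.
  + rewrite wsubst1 /= /swn.
    by case: (j == i); case: (j == i.+1).
  + by rewrite wsubst1.
-
  rewrite wsubst_comp.
  case: b => /=.
  + rewrite wsubst1 /= reduceK.
    transitivity (wsubst (fun b : bool => [:: (true, if b then swn i k else swn i j, false)]) w); last by [].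
    apply: wsubst_ext => bb.
    rewrite wsubst1 /theta_gen /= /swn.
    by case: bb; [case: (k == i); case: (k == i.+1) | case: (j == i); case: (j == i.+1)].
  + rewrite wsubst1 /= reduceK.
    transitivity (wsubst (fun b : bool => [:: (true, if b then k else j, false)]) w); last by [].
    by apply: wsubst_ext => bb; rewrite wsubst1.
Qed.

Lemma theta_word_interp u s :
  theta_word w u (wsubst interp s) = wsubst interp (thpw u s).
Proof.
elim: u s => // a u IH s.
rewrite /theta_word /= -/(theta_word w u _).
rewrite wsubst_comp (wsubst_ext _ (comm_atom a.1)) -wsubst_comp.
by rewrite IH.
Qed.

End TH.

Definition qq (a b : nat) : seq (bool * bool) :=
  match a, b with
  | 0, 1 => [:: (false, false)]
  | 1, 0 => [:: (false, true)]
  | 1, 2 => [:: (false, false)]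
  | 2, 1 => [:: (false, true)]
  | 0, 2 => [:: (true, false)]
  | 2, 0 => [:: (true, true)]
  | _, _ => [::] end.

Fixpoint phi (p : nat -> nat) (s : seq ((bool * nat) * bool)) : seq (bool * bool) :=
  match s with
  | [::] => [::]
  | a :: s' => (if a.1.1 then [::] else qq (p a.1.2) (p a.1.2.+1))
                ++ phi (fun k => p (swn a.1.2 k)) s'
  end.

Fixpoint pst (p : nat -> nat) (s : seq ((bool * nat) * bool)) : nat -> nat :=
  match s with
  | [::] => p
  | a :: s' => pst (fun k => p (swn a.1.2 k)) s'
  end.

Lemma phi_ext p p' s : p =1 p' -> phi p s = phi p' s.
Proof.
elim: s p p' => //= a s IH p p' E.
by rewrite !E (IH _ (fun k => p' (swn a.1.2 k))) // => k; rewrite E.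
Qed.

Lemma pst_ext p p' s : p =1 p' -> pst p s =1 pst p' s.
Proof.
elim: s p p' => //= a s IH p p' E.
by apply: IH => k; rewrite E.
Qed.

Lemma phi_cat p s t : phi p (s ++ t) = phi p s ++ phi (pst p s) t.
Proof. by elim: s p => //= a s IH p; rewrite IH catA. Qed.

Lemma pst_cat p s t : pst p (s ++ t) = pst (pst p s) t.
Proof. by elim: s p => //= a s IH p; rewrite IH. Qed.

Lemma swnK i k : swn i (swn i k) = k.
Proof. rewrite /swn; repeat (case: eqP => /=; try lia); lia. Qed.

Lemma swn_inj i : injective (swn i).
Proof. by move=> x y E; rewrite -(swnK i x) E swnK. Qed.

Lemma pst_inj p s : injective p -> injective (pst p s).
Proof.
elim: s p => //= a s IH p Hp; apply: IH => x y /Hp; exact: swn_inj.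
Qed.

Lemma swn_l i : swn i i = i.+1.
Proof. by rewrite /swn eqxx. Qed.
Lemma swn_r i : swn i i.+1 = i.
Proof. rewrite /swn; repeat (case: eqP => /=; try lia); lia. Qed.
Lemma swn_2 i : swn i i.+2 = i.+2.
Proof. rewrite /swn; repeat (case: eqP => /=; try lia); lia. Qed.
Lemma swn_m i : swn i.+1 i = i.
Proof. rewrite /swn; repeat (case: eqP => /=; try lia); lia. Qed.
Lemma swn_far i j : (i.+1 < j) || (j.+1 < i) -> swn i j = j /\ swn i j.+1 = j.+1.
Proof. move=> H; rewrite /swn; split; repeat (case: eqP => /=; try lia); lia. Qed.
Lemma swn_comm i j k : (i.+1 < j) || (j.+1 < i) -> swn i (swn j k) = swn j (swn i k).
Proof. move=> H; rewrite /swn; repeat (case: eqP => /=; try lia); lia. Qed.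
Lemma swn_braid i k : swn i (swn i.+1 (swn i k)) = swn i.+1 (swn i (swn i.+1 k)).
Proof. rewrite /swn; repeat (case: eqP => /=; try lia); lia. Qed.

Lemma qq_inv a b : qq b a = winv (qq a b).
Proof. by case: a => [|[|[|a]]]; case: b => [|[|[|b]]]. Qed.

Lemma qq_cancel a b t : reduce (qq a b ++ qq b a ++ t) = reduce t.
Proof. by rewrite [qq b a]qq_inv cancel_l. Qed.

Lemma qq_yb a b c :
  reduce (qq a b ++ qq a c ++ qq b c) = reduce (qq b c ++ qq a c ++ qq a b).
Proof.
by case: a => [|[|[|a]]]; case: b => [|[|[|b]]]; case: c => [|[|[|c]]];
  rewrite /= ?cats0.
Qed.

Lemma qq_far a b c d : a != c -> a != d -> b != c -> b != d ->
  reduce (qq a b ++ qq c d) = reduce (qq c d ++ qq a b).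
Proof.
by case: a => [|[|[|a]]]; case: b => [|[|[|b]]]; case: c => [|[|[|c]]];
  case: d => [|[|[|d]]]; rewrite /= ?cats0.
Qed.

Lemma phi_inv n s t : fvb_eq n s t -> forall p, injective p ->
  reduce (phi p s) = reduce (phi p t) /\ pst p s =1 pst p t.
Proof.
elim => {s t}.
- by [].
- by move=> u v _ IH p Hp; case: (IH p Hp) => E1 E2; split => // k; rewrite E2.
- move=> u v t _ IH1 _ IH2 p Hp; case: (IH1 p Hp) => E1 F1; case: (IH2 p Hp) => E2 F2.
  by split; [rewrite E1 E2 | move=> k; rewrite F1 F2].
- move=> pre suf u v _ IH p Hp.
  have Hp1 := @pst_inj p pre Hp.
  case: (IH _ Hp1) => E F.
  rewrite !phi_cat !pst_cat; split.
  + rewrite -reduce_mid E reduce_mid.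
  by rewrite (phi_ext suf F).
  + by apply: pst_ext.
- move=> [[b i] e] _ p Hp /=.
  rewrite swn_l swn_r; split.
  + by case: b => //=; rewrite cats0 -(cats0 (qq _ _ ++ _)) -catA qq_cancel.
  + by move=> k /=; rewrite swnK.
- move=> u v [] {u v}.
  + move=> i _ p Hp /=; rewrite swn_l swn_r; split.
    * by rewrite cats0 -(cats0 (qq _ _ ++ _)) -catA qq_cancel.
    * by move=> k /=; rewrite swnK.
  + move=> i _ p Hp /=; split => // k; by rewrite swnK.
  + move=> i _ p Hp /=; rewrite ?swn_l ?swn_r ?swn_2 ?swn_m /= ?swn_l ?swn_r ?swn_2 ?swn_m; split.
    * rewrite !cats0.
exact: qq_yb.
    * by move=> k; rewrite swn_braid.
  + move=> i _ p Hp /=; split => // k; by rewrite swn_braid.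
  + move=> i _ p Hp /=; rewrite ?swn_l ?swn_r ?swn_2 ?swn_m /= ?swn_l ?swn_r ?swn_2 ?swn_m; split.
    * by rewrite !cats0.
    * by move=> k; rewrite swn_braid.
  + move=> i j _ _ H p Hp /=.
    have [H1 H2] := swn_far H.
    have H' : (j.+1 < i) || (i.+1 < j) by rewrite orbC.
    have [H3 H4] := swn_far H'.
    rewrite H1 H2 H3 H4; split; last by move=> k; rewrite swn_comm.
    rewrite !cats0; apply: qq_far; apply/eqP => /Hp; lia.
  + move=> i j _ _ H p Hp /=; split => // k; by rewrite swn_comm.
  + move=> i j _ _ H p Hp /=.
    have [H1 H2] := swn_far H.
    rewrite H1 H2; split; last by move=> k; rewrite swn_comm.
    by rewrite !cats0.
Qed.

Definition UU : seq ((bool * nat) * bool) := [:: sg 0; rh 0; sg 0; rh 0; rh 0; sg 1; rh 1; sg 1; rh 1; rh 0; rh 0; sg 0; rh 0; sg 0; rh 0; rh 1; sg 1; rh 1; sg 1; rh 0; rh 0; sg 0; rh 0; sg 0; sg 0; rh 0; sg 1; sg 0; rh 0; sg 1; sg 0; rh 0; sg 0; rh 0; sg 1; rh 0; sg 0; sg 1; rh 0; sg 0; rh 0; sg 1; rh 1; sg 1; rh 1; rh 0; sg 0; rh 0; sg 0; rh 0; rh 0; rh 1; sg 1; rh 1; sg 1; rh 0; rh 0; sg 0; rh 0; sg 0; sg 0; rh 0; sg 1; sg 0; rh 0; sg 1; rh 0; sg 0; rh 0; sg 0; sg 1; rh 0; sg 0; sg 1; rh 0; sg 0; sg 0; rh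 0; sg 0; rh 0].
Definition VV : seq ((bool * nat) * bool) := [:: rh 0; sg 0; rh 0; sg 0; sg 0; sg 1; rh 1; sg 1; rh 1; sg 0; sg 0; rh 0; sg 0; rh 0; sg 0; rh 1; sg 1; rh 1; sg 1; sg 0; rh 0; sg 0; rh 0; sg 0; sg 0; rh 0; sg 1; rh 0; sg 0; sg 1; sg 0; rh 0; sg 0; rh 0; sg 1; sg 0; rh 0; sg 1; rh 0; sg 0; sg 0; sg 1; rh 1; sg 1; rh 1; sg 0; rh 0; sg 0; rh 0; sg 0; sg 0; rh 1; sg 1; rh 1; sg 1; sg 0; sg 0; rh 0; sg 0; rh 0; sg 0; rh 0; sg 1; rh 0; sg 0; sg 1; rh 0; sg 0; rh 0; sg 0; sg 1; sg 0; rh 0; sg 1; rh 0; sg 0; sg 0; rh 0; sg 0; rh 0].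
Definition GG : seq (bool * bool) := [:: (false, false); (false, false); (true, false); (true, false); (false, true); (false, true); (true, true); (false, false); (false, false); (true, true); (false, true); (false, true); (true, false); (true, false); (false, false); (false, false); (true, true); (false, true); (false, true); (true, true)].
Definition HH : seq (bool * bool) := [:: (false, true); (true, false); (true, false); (false, false); (false, false); (true, true); (true, true); (false, true); (true, true); (false, false); (false, false); (true, false); (false, true); (true, false); (true, false); (false, true); (false, true); (true, true); (true, true); (false, false); (false, false); (false, false); (true, true); (false, true); (false, true); (true, false)].

Lemma UU_ker : [&& thpw UU [:: ((0,(0,0)),false)] == [:: ((0,(0,0)),false)],
  thpw UU [:: ((0,(1,0)),false)] == [:: ((0,(1,0)),false)],
  thpw UU [:: ((0,(2,0)),false)] == [:: ((0,(2,0)),false)],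
  thpw UU [:: ((1,(0,0)),false)] == [:: ((1,(0,0)),false)],
  thpw UU [:: ((1,(1,0)),false)] == [:: ((1,(1,0)),false)] &
  thpw UU [:: ((1,(2,0)),false)] == [:: ((1,(2,0)),false)]].
Proof. by vm_compute. Qed.
Lemma GGc : reduce (phi id UU) = GG. Proof. by vm_compute. Qed.
Lemma GGi : reduce (phi id (winv UU)) = winv GG. Proof. by vm_compute. Qed.

Lemma phi_step p a t : reduce (phi p (step a t)) = reduce (phi p (a :: t)) /\
  pst p (step a t) =1 pst p (a :: t).
Proof.
case: t => [|b t] //=.
case: ifP => [/eqP Hb|_] //.
case: a Hb => [[c i] e] -> /=.
rewrite swn_l swn_r; split.
- have E : (fun k => p (swn i (swn i k))) =1 p by move=> k; rewrite swnK.
  rewrite (phi_ext t E).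
  by case: c => //=; rewrite qq_cancel.
- move=> k; symmetry; apply: pst_ext => k'; by rewrite swnK.
Qed.

Lemma phi_reduce p s : reduce (phi p (reduce s)) = reduce (phi p s) /\
  pst p (reduce s) =1 pst p s.
Proof.
elim: s p => [|a s IH] p //.
rewrite reduce_cons; case: (phi_step p a (reduce s)) => E F.
rewrite E; split.
- rewrite /= -reduce_catr (proj1 (IH _)) reduce_catr //.
- move=> k; rewrite F /=; exact: (proj2 (IH _)).
Qed.

Lemma pst_comp p s k : pst p s k = p (pst id s k).
Proof.
elim: s p k => //= a s IH p k.
by rewrite IH [in RHS]IH.
Qed.

Lemma pst_big s k : all (fun a => a.1.2 < 2) s -> 2 < k -> pst id s k = k.
Proof.
elim: s => //= a s IH /andP[Ha Hs] Hk.
rewrite pst_comp IH //= /swn.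
by repeat (case: eqP => /=; try lia).
Qed.

Lemma thpw_fix u t j k : all (fun a => a.1.2 < 2) u -> 2 < j -> t < 2 ->
  thpw u [:: ((t, (j, k)), false)] = [:: ((t, (j, k)), false)].
Proof.
move=> + Hc2 Hc1.
elim: u => //= a u IH /andP[Ha Hu].
rewrite -/(thpw u _) wsubst1.
have -> : thp a.1 (t, (j, k)) = [:: ((t, (j, k)), false)].
  case: a Ha => [[b i] e] /= Hi.
  rewrite /thp /= Hc1.
  case: b => /=.
  - rewrite /swn; case: eqP => [E|_]; first lia.
    by case: eqP => [E|_]; first lia.
  - have -> : (j == i) = false by apply/eqP; lia.
    have -> : (j == i.+1) = false by apply/eqP; lia.
    by rewrite !andbF.
by rewrite reduce1 IH.
Qed.

Definition kchk (u : seq ((bool * nat) * bool)) : bool :=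
  all (fun c => thpw u [:: (c, false)] == [:: (c, false)])
    [:: (0,(0,0)); (0,(1,0)); (0,(2,0)); (1,(0,0)); (1,(1,0)); (1,(2,0))].

Definition small (u : seq ((bool * nat) * bool)) := all (fun a => a.1.2 < 2) u.

Lemma ker_of n w u : small u -> kchk u -> in_ker n w u.
Proof.
move=> Hs Hk [b j] _.
have key : forall t, t < 2 -> thpw u [:: ((t, (j, 0)), false)] = [:: ((t, (j, 0)), false)].
  move=> t Ht; case: (ltnP 2 j) => Hj; first exact: thpw_fix.
  apply/eqP/(allP Hk).
  by case: j Hj => [|[|[|j]]] // _; case: t Ht => [|[|t]].
have E : [:: ((b, j), false)] = wsubst (interp w) [:: ((if b then 1 else 0, (j, 0)), false)].
  by rewrite wsubst1; case: b.
rewrite E theta_word_interp key; last by case: ifP.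
by [].

Qed.

Definition pchk (u : seq ((bool * nat) * bool)) : bool :=
  [&& pst id u 0 == 0, pst id u 1 == 1 & pst id u 2 == 2].

Lemma pure_of u : small u -> pchk u -> forall p, pst p u =1 p.
Proof.
move=> Hs /and3P[/eqP H0 /eqP H1 /eqP H2] p k.
rewrite pst_comp; congr p.
case: (ltnP 2 k) => Hk; first exact: pst_big.
by case: k Hk => [|[|[|k]]].
Qed.

Lemma small_winv u : small u -> small (winv u).
Proof. by rewrite /small /winv all_rev all_map. Qed.

Definition gimg (a : bool * bool) : seq (bool * bool) :=
  if a.1 then (if a.2 then winv HH else HH) else (if a.2 then winv GG else GG).

Lemma gimg_ok a : nored (gimg a) && (gimg a != [::]).
Proof. by case: a => [[] []]; vm_compute. Qed.

Lemma gimg_bd a b : b != flip a ->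
  match gimg a, gimg b with
  | x :: s, y :: t => y != flip (last x s)
  | _, _ => false end.
Proof. by case: a => [[] []]; case: b => [[] []]; vm_compute. Qed.

Lemma nored_cat_cons (G : eqType) (x : G * bool) s y t :
  nored (x :: s) -> nored (y :: t) -> y != flip (last x s) -> nored ((x :: s) ++ y :: t).
Proof.
elim: s x => [|x' s IH] x /=; first by move=> _ -> ->.
move=> /andP[Hx Hs] Ht Hl; rewrite Hx /=; exact: IH.
Qed.

Lemma flat_nored b r : nored (b :: r) ->
  nored (gimg b ++ flatten (map gimg r)).
Proof.
elim: r b => [|c r IH] b /=.
- by move=> _; rewrite cats0; case/andP: (gimg_ok b).
- move=> /andP[Hcb Hr].
  have := IH c Hr.
  have := gimg_bd Hcb.
  case/andP: (gimg_ok b) => Hb _.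
  case E1: (gimg b) Hb => [|x s] //.
  case E2: (gimg c) => [|y t] //.
  move=> Hl Hb Hn.
  exact: (nored_cat_cons Hl Hn Hb).
Qed.

Definition piece (a : bool * bool) :=
  if a.2 then winv ((fun b : bool => if b then VV else UU) a.1)
  else (fun b : bool => if b then VV else UU) a.1.

Lemma piece_ok a : [&& small (piece a), pchk (piece a) &
  reduce (phi id (piece a)) == gimg a].
Proof. by case: a => [[] []]; vm_compute. Qed.

Lemma phi_img r p : p =1 id ->
  reduce (phi p (img (fun b : bool => if b then VV else UU) r)) =
  reduce (flatten (map gimg r)).
Proof.
elim: r p => [|a r IH] p Hp //.
rewrite img_cons -/(piece a) phi_cat.
case/and3P: (piece_ok a) => Hs Hc /eqP Hg.
have Hpp : pst p (piece a) =1 id by move=> k; rewrite (pure_of Hs Hc) Hp.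
rewrite -reduce_catl -reduce_catr IH // reduce_catr.
by rewrite (phi_ext _ Hp) Hg.
Qed.

Unset Implicit Arguments.
Theorem theorem3p2 (n : nat) (w : seq (bool * bool)) :
  3 <= n ->
  exists u v : seq ((bool * nat) * bool),
    [/\ fvb_word n u, fvb_word n v, in_ker n w u, in_ker n w v &
      forall r : seq (bool * bool), reduced r -> r != [::] ->
        ~ fvb_eq n (wsubst (fun b : bool => if b then v else u) r) [::]].
Proof.
move=> Hn.
have sU : small UU by vm_compute.
have sV : small VV by vm_compute.
have kU : kchk UU by vm_compute.
have kV : kchk VV by vm_compute.
exists UU, VV; split.
- apply: sub_all sU => a /=; lia.
- apply: sub_all sV => a /=; lia.
- exact: ker_of.
- exact: ker_of.
- move=> r Hr Hne Heq.
  have [E _] := phi_inv Heq (fun x y (H : id x = id y) => H).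
  clear Heq; move: E; rewrite wsubstE (proj1 (phi_reduce _ _)) (phi_img r (fun k => erefl)).
  case: r Hr Hne => [|b r] Hr Hne; first by rewrite eqxx in Hne.
  move/eqP: Hr => Hr.
  have Hn' : nored (b :: r) by rewrite -Hr; apply: nored_reduce.
  change (reduce (gimg b ++ flatten (map gimg r)) = reduce (phi id [::]) -> False).
  rewrite (reduce_id (flat_nored Hn')).
  case/andP: (gimg_ok b) => _; case: (gimg b) => [|x s] // _.
Qed.
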